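(* Assume $q\ge n$ (so $\psi^-:M_{q,n}\to\mathrm{Sym}^n$ is surjective), and let $y$, $x$, $x'$, $Y$, $Z$, $Z_y$, $Z_{x'}$, $S_y$ be as in the context. Then: (i) $Y$ is a single $K_x\times K'_{\mathbb C}$-orbit, generated by $y$; hence $Y\cong(K_x\times K'_{\mathbb C})/S_y$. (ii) There is a group homomorphism $\beta:K_x\to K'_{x'}$ such that $S_y=\{(k,\beta(k)):k\in K_x\}$. (iii) There is a bijection $T:Z_y\to Z_{x'}$ commuting with the action of $K^t_{\mathbb C}=\mathrm O(t,\mathbb C)$ and satisfying $T((k,\beta(k))\cdot z)=\beta(k)\cdot T(z)$ for all $z\in Z_y$ and $k\in K_x$.
   Context: Let $p,q,t,n$ satisfy $p+q+t$ even, $\min(p,q+t)\ge2n$, $\max(p,q+t)>2n$. $K_{\mathbb C}=\mathrm O(p,\mathbb C)\times\mathrm O(q,\mathbb C)$, $K^t_{\mathbb C}=\mathrm O(t,\mathbb C)$, $K'_{\mathbb C}=\mathrm{GL}(n,\mathbb C)$. $W_H=M_{p,n}\oplus M_{q,n}\oplus M_{t,n}\ni(w^+;w_1,w_2)$, $W=M_{p,n}\oplus M_{q,n}$, ${\rm pr}(w^+;w_1,w_2)=(w^+;w_1)$. Actions: $(o_p,o_q,o_t,g)\cdot(w^+;w_1,w_2)=(o_pw^+g^{-1};o_qw_1g^T,o_tw_2g^T)$. Maps: $\phi(w^+;w_1)=w^+w_1^T\in M_{p,q}$, $\psi^+(w^+)=(w^+)^Tw^+$, $\psi^-(w_1)=w_1^Tw_1$,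 $\psi_2(w_2)=w_2^Tw_2$. $K_{\mathbb C}$ acts on $M_{p,q}$ by $(o_p,o_q)\cdot m=o_pmo_q^T$ and $K'_{\mathbb C}$ on $\mathrm{Sym}^n$ by $g\cdot s=gsg^T$. Null cone $\overline{\mathcal N}=\{\psi^+(w^+)=0,\ \psi^-(w_1)+\psi_2(w_2)=0\}$. For $m\ge 2n$ let $E_{m,n}$ be the $m\times n$ matrix with block rows $I_n$, $0_{(m-2n)\times n}$, $iI_n$. Put $z_0=(E_{p,n};E_{q+t,n})\in\overline{\mathcal N}$ (with $E_{q+t,n}$ split into its first $q$ and last $t$ rows), $y=(y^+;y^-)={\rm pr}(z_0)$, $x=\phi(y)$, $x'=-\psi^-(y^-)$. $K_x$, $K'_{x'}$ are the stabilizers of $x$ in $K_{\mathbb C}$ and of $x'$ in $K'_{\mathbb C}$; $S_y$ is the stabilizer of $y$ in $K_{\mathbb C}\times K'_{\mathbb C}$. $Y=\phi^{-1}(x)\cap{\rm pr}(\overline{\mathcal N})$, $Z=\{z\in\overline{\mathcal N}:\phi({\rm pr}(z))=x\}$, $Z_y=\{z\in Z:{\rm pr}(z)=y\}$, $Z_{x'}=\psi_2^{-1}(x')\subseteq M_{t,n}$. *)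

(* Defs.v *)
(* The complex field C is modelled by an arbitrary
   numClosedFieldType (algebraically closed, char 0, with 'i). *)
From HB Require Import structures.
From mathcomp Require Import all_boot all_order all_algebra.
Set Implicit Arguments. Unset Strict Implicit. Unset Printing Implicit Defensive.
Import Order.TTheory GRing.Theory Num.Theory.
Local Open Scope ring_scope.

Section Defs.
Variable C : numClosedFieldType.

Definition orthm (m : nat) (o : 'M[C]_m) : bool := o^T *m o == 1%:M.
Definition glm (m : nat) (g : 'M[C]_m) : bool := g \in unitmx.

(* E_{m,n}: block rows I_n, 0_{(m-2n) x n}, i I_n *)
Definition Emat (m n : nat) : 'M[C]_(m, n) :=
  \matrix_(i < m, j < n)
    if (i < n)%N then ((i : nat) == j)%:R
    else if (m - n <= i)%N then 'i * (((i - (m - n))%N == j))%:R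
    else 0.

Definition phi (p q n : nat) (wp : 'M[C]_(p, n)) (w1 : 'M[C]_(q, n)) : 'M[C]_(p, q) :=
  wp *m w1^T.
(* psi^+, psi^-, psi_2 are all w |-> w^T w *)
Definition psi (m n : nat) (w : 'M[C]_(m, n)) : 'M[C]_n := w^T *m w.

Definition W (p q n : nat) := ('M[C]_(p, n) * 'M[C]_(q, n))%type.
Definition WH (p q t n : nat) := ('M[C]_(p, n) * 'M[C]_(q, n) * 'M[C]_(t, n))%type.

Definition pr (p q t n : nat) (z : WH p q t n) : W p q n := (z.1.1, z.1.2).

Definition actW (p q n : nat) (op : 'M[C]_p) (oq : 'M[C]_q) (g : 'M[C]_n)
  (w : W p q n) : W p q n :=
  (op *m w.1 *m invmx g, oq *m w.2 *m g^T).
Definition actWH (p q t n : nat) (op : 'M[C]_p) (oq : 'M[C]_q) (ot : 'M[C]_t)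
  (g : 'M[C]_n) (z : WH p q t n) : WH p q t n :=
  (op *m z.1.1 *m invmx g, oq *m z.1.2 *m g^T, ot *m z.2 *m g^T).

Definition nullcone (p q t n : nat) (z : WH p q t n) : Prop :=
  psi z.1.1 = 0 /\ psi z.1.2 + psi z.2 = 0.

(* z0 = (E_{p,n}; E_{q+t,n}) split into first q and last t rows *)
Definition z0 (p q t n : nat) : WH p q t n :=
  (Emat p n, usubmx (Emat (q + t) n), dsubmx (Emat (q + t) n)).
Definition ypt (p q t n : nat) : W p q n := pr (z0 p q t n).
Definition xpt (p q t n : nat) : 'M[C]_(p, q) :=
  phi (ypt p q t n).1 (ypt p q t n).2.
Definition x'pt (p q t n : nat) : 'M[C]_n := - psi (ypt p q t n).2.

Definition in_Kx (p q t n : nat) (op : 'M[C]_p) (oq : 'M[C]_q) : bool :=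
  [&& orthm op, orthm oq & op *m xpt p q t n *m oq^T == xpt p q t n].
Definition in_K'x' (p q t n : nat) (g : 'M[C]_n) : bool :=
  glm g && (g *m x'pt p q t n *m g^T == x'pt p q t n).
Definition in_Sy (p q t n : nat) (op : 'M[C]_p) (oq : 'M[C]_q) (g : 'M[C]_n) : Prop :=
  [/\ orthm op, orthm oq, glm g & actW op oq g (ypt p q t n) = ypt p q t n].

Definition inY (p q t n : nat) (w : W p q n) : Prop :=
  phi w.1 w.2 = xpt p q t n /\
  exists z : WH p q t n, nullcone z /\ pr z = w.
Definition inZ (p q t n : nat) (z : WH p q t n) : Prop :=
  nullcone z /\ phi (pr z).1 (pr z).2 = xpt p q t n.
Definition inZy (p q t n : nat) (z : WH p q t n) : Prop :=
  inZ z /\ pr z = ypt p q t n.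
Definition inZx' (p q t n : nat) (w2 : 'M[C]_(t, n)) : Prop :=
  psi w2 = x'pt p q t n.

End Defs.

(* Main.v *)
Require Import Defs.
From HB Require Import structures.
From mathcomp Require Import all_boot all_order all_algebra.
From mathcomp Require Import zify.
Import Order.TTheory GRing.Theory Num.Theory.
Local Open Scope ring_scope.

Section H.
Variable C : numClosedFieldType.

Lemma sum_delta m (a : nat) (F : nat -> C) :
  \sum_(k < m) (((k:nat) == a)%:R * F k) = if (a < m)%N then F a else 0.
Proof.
elim: m => [|m IH]; first by rewrite big_ord0 ltn0.
rewrite big_ord_recr /= IH.
case: eqP => [->|ne].
  by rewrite ltnn leqnn mul1r add0r.
rewrite mul0r addr0 ltnS [(a <= m)%N]leq_eqVlt.
by case: eqP => //= e; case: ne; rewrite e.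
Qed.

Definition ee (m n k j : nat) : C := (k == j)%:R + 'i * ((k == j + (m - n))%N)%:R.

Lemma Emat_ee m n (i : 'I_m) (j : 'I_n) : (2 * n <= m)%N -> Emat C m n i j = ee m n i j.
Proof.
move=> h; have hi := ltn_ord i; have hj := ltn_ord j.
rewrite mxE /ee; case: ifP => h1.
  have -> : ((i : nat) == j + (m - n))%N = false by apply/eqP; lia.
  by rewrite mulr0 addr0.
have -> : ((i : nat) == j)%N = false by apply/eqP; lia.
case: ifP => h2.
  have -> : ((i - (m - n))%N == j) = ((i:nat) == j + (m - n))%N.
    by apply/eqP/eqP; lia.
  by rewrite add0r.
have -> : ((i : nat) == j + (m - n))%N = false by apply/eqP; lia.
by rewrite mulr0 addr0.
Qed.

Lemma EtE m n : (2 * n <= m)%N -> (Emat C m n)^T *m Emat C m n = 0.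
Proof.
move=> h; apply/matrixP => i j; rewrite [LHS]mxE [RHS]mxE.
have hi := ltn_ord i; have hj := ltn_ord j.
under eq_bigr => k _ do rewrite [_^T _ _]mxE !Emat_ee // {1}/ee mulrDl -mulrA.
rewrite big_split /= -mulr_sumr (sum_delta m i (fun k => ee m n k j)) (sum_delta m (i + (m - n)) (fun k => ee m n k j)).
have -> : (i < m)%N by lia.
have -> : (i + (m - n) < m)%N by lia.
rewrite /ee.
have -> : ((i : nat) == j + (m - n))%N = false by apply/eqP; lia.
have -> : ((i + (m - n))%N == j) = false by apply/eqP; lia.
have -> : ((i + (m - n))%N == j + (m - n))%N = ((i : nat) == j) by apply/eqP/eqP; lia.
by rewrite mulr0 addr0 add0r mulrA -expr2 sqrCi mulN1r addrN.
Qed.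

Definition sel m n : 'M[C]_(n, m) := \matrix_(i < n, k < m) ((k:nat) == i)%:R.

Lemma sel_E m m' n (A : 'M[C]_(m, n)) :
  (2 * n <= m')%N -> (n <= m)%N ->
  (forall k (j : 'I_n), A k j = ee m' n k j) -> sel m n *m A = 1%:M.
Proof.
move=> h hm hA; apply/matrixP => i j; rewrite !mxE.
under eq_bigr => k _ do rewrite !mxE hA.
rewrite (sum_delta m i (fun k => ee m' n k j)).
have -> : (i < m)%N by have := ltn_ord i; lia.
rewrite /ee.
have -> : ((i : nat) == j + (m' - n))%N = false by apply/eqP; have := ltn_ord i; lia.
by rewrite mulr0 addr0.
Qed.

End H.

Theorem lemma5p3 (C : numClosedFieldType) (p q t n : nat) :
  ~~ odd (p + q + t) ->
  (2 * n <= minn p (q + t))%N ->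
  (2 * n < maxn p (q + t))%N ->
  (n <= q)%N ->
  (* (i) Y is the K_x x K'_C-orbit of y *)
  (forall w : W C p q n,
     @inY C p q t n w <->
     exists (op : 'M[C]_p) (oq : 'M[C]_q) (g : 'M[C]_n),
       [/\ @in_Kx C p q t n op oq, @glm C n g & w = @actW C p q n op oq g (ypt C p q t n)]) /\
  (* (ii) S_y is the graph of a homomorphism beta : K_x -> K'_{x'} *)
  (exists beta : 'M[C]_p -> 'M[C]_q -> 'M[C]_n,
     (forall op oq, @in_Kx C p q t n op oq -> @in_K'x' C p q t n (beta op oq)) /\
     (forall op1 oq1 op2 oq2, @in_Kx C p q t n op1 oq1 -> @in_Kx C p q t n op2 oq2 ->
        beta (op1 *m op2) (oq1 *m oq2) = beta op1 oq1 *m beta op2 oq2) /\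
     (forall op oq g, @in_Sy C p q t n op oq g <-> (@in_Kx C p q t n op oq /\ g = beta op oq)) /\
  (* (iii) an equivariant bijection T : Z_y -> Z_{x'} *)
     (exists T : WH C p q t n -> 'M[C]_(t, n),
        (forall z, @inZy C p q t n z -> @inZx' C p q t n (T z)) /\
        (forall z1 z2, @inZy C p q t n z1 -> @inZy C p q t n z2 -> T z1 = T z2 -> z1 = z2) /\
        (forall w2, @inZx' C p q t n w2 -> exists z, @inZy C p q t n z /\ T z = w2) /\
        (forall (ot : 'M[C]_t) z, @orthm C t ot -> @inZy C p q t n z ->
           T (@actWH C p q t n 1%:M 1%:M ot 1%:M z) = ot *m T z) /\
        (forall op oq z, @in_Kx C p q t n op oq -> @inZy C p q t n z ->
           T (@actWH C p q t n op oq 1%:M (beta op oq) z) = T z *m (beta op oq)^T))).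
Proof.
move=> _ hmin _ hq.
have hp2 : (2 * n <= p)%N by lia.
have hqt : (2 * n <= q + t)%N by lia.
have hnp : (n <= p)%N by lia.
set E := Emat C p n.
set Y : 'M[C]_(q, n) := usubmx (Emat C (q + t) n).
set D : 'M[C]_(t, n) := dsubmx (Emat C (q + t) n).
have yE : ypt C p q t n = (E, Y) by [].
have xE : xpt C p q t n = E *m Y^T by [].
have x'E : x'pt C p q t n = - psi Y by [].
set L := sel C p n.
set S := (sel C q n)^T.
have LE : L *m E = 1%:M.
  by apply: (@sel_E C p p n E) => // k j; rewrite Emat_ee.
have SY : sel C q n *m Y = 1%:M.
  apply: (@sel_E C q (q + t) n Y) => // k j.
  by rewrite mxE Emat_ee.
have YS : Y^T *m S = 1%:M by rewrite /S -trmx_mul SY trmx1.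
have EE : psi E = 0 by rewrite /psi EtE.
have K : forall op oq, @in_Kx C p q t n op oq ->
    [/\ (L *m op *m E) \in unitmx, op *m E = E *m (L *m op *m E) &
        oq *m Y = Y *m (invmx (L *m op *m E))^T].
  move=> op oq /and3P [_ _ /eqP hx]; rewrite xE in hx.
  set b := L *m op *m E.
  set Bm := Y^T *m oq^T *m S.
  have h1 : op *m E *m Bm = E.
    by rewrite /Bm !mulmxA -(mulmxA op E) hx -mulmxA YS mulmx1.
  have h2 : b *m Bm = 1%:M by rewrite /b -(mulmxA L op E) -(mulmxA L) h1 LE.
  have h3 : Bm *m b = 1%:M by apply: mulmx1C.
  have ub : b \in unitmx by case: (mulmx1_unit h2).
  have iB : invmx b = Bm.
    by rewrite -[invmx b]mulmx1 -h2 mulmxA mulVmx // mul1mx.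
  have opE : op *m E = E *m b by rewrite -[op *m E]mulmx1 -h3 mulmxA h1.
  split => //.
  have h4 : b *m (Y^T *m oq^T) = Y^T.
    by rewrite -[Y^T in RHS]mul1mx -LE -mulmxA -hx /b !mulmxA.
  have h5 : Y^T *m oq^T = Bm *m Y^T by rewrite -[LHS]mul1mx -h3 -mulmxA h4.
  by rewrite iB; apply: trmx_inj; rewrite trmx_mul [in RHS]trmx_mul trmxK.
have orth1 : forall m, @orthm C m 1%:M by move=> m; rewrite /orthm trmx1 mul1mx.
split.
  move=> w; split.
    case=> hphi _; rewrite /phi xE in hphi.
    set B := w.2^T *m S.
    set M := L *m w.1.
    have h1 : w.1 *m B = E by rewrite /B mulmxA hphi -mulmxA YS mulmx1.
    have h2 : M *m B = 1%:M by rewrite /M -mulmxA h1 LE.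
    have h3 : B *m M = 1%:M by apply: mulmx1C.
    have ub : B \in unitmx by case: (mulmx1_unit h3).
    have iB : invmx B = M.
      by rewrite -[invmx B]mulmx1 -h3 mulmxA mulVmx // mul1mx.
    have w1E : w.1 = E *m M by rewrite -[w.1]mulmx1 -h3 mulmxA h1.
    have h4 : M *m w.2^T = Y^T by rewrite /M -mulmxA hphi mulmxA LE mul1mx.
    have w2E : w.2 = Y *m B^T.
      by apply: trmx_inj; rewrite trmx_mul trmxK -[w.2^T]mul1mx -h3 -mulmxA h4.
    exists 1%:M, 1%:M, B; split => //.
      by apply/and3P; split => //; rewrite mul1mx trmx1 mulmx1.
    rewrite /actW yE /= !mul1mx iB -w1E -w2E.
    exact: surjective_pairing.
  case=> op [oq [g [hK hg ->]]].
  case/and3P: (hK) => /eqP Hop /eqP Hoq /eqP hx; rewrite xE in hx.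
  rewrite /inY yE /actW /=; split.
    rewrite /phi xE -hx !trmx_mul !trmxK !mulmxA.
    by rewrite -(mulmxA _ (invmx g) g) mulVmx // mulmx1.
  exists (op *m E *m invmx g, oq *m Y *m g^T, D *m g^T); split => //; split => /=.
    rewrite /psi !trmx_mul !mulmxA -(mulmxA _ op^T op) Hop mulmx1.
    by rewrite -(mulmxA _ E^T E) EtE // mulmx0 mul0mx.
  have key : Y^T *m Y + D^T *m D = 0.
    by rewrite -mul_row_col -tr_col_mx vsubmxK EtE.
  rewrite /psi !trmx_mul !trmxK !mulmxA -(mulmxA _ oq^T oq) Hoq mulmx1.
  transitivity (g *m (Y^T *m Y + D^T *m D) *m g^T).
    by rewrite mulmxDr mulmxDl !mulmxA.
  by rewrite key mulmx0 mul0mx.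
exists (fun op oq => L *m op *m E); split; [|split; [|split]].
- move=> op oq hK; have [ub opE oqY] := K op oq hK; set b := L *m op *m E in ub opE oqY *.
  case/and3P: hK => _ /eqP Hoq _.
  apply/andP; split => //; apply/eqP; rewrite x'E mulmxN mulNmx; congr (- _).
  have h : (oq *m Y)^T *m (oq *m Y) = psi Y.
    by rewrite /psi trmx_mul -!mulmxA (mulmxA oq^T) Hoq mul1mx.
  rewrite -{1}h oqY trmx_mul trmxK !mulmxA mulmxV // mul1mx.
  by rewrite -!mulmxA -[(invmx _)^T *m _^T]trmx_mul mulmxV // trmx1 mulmx1.
- move=> op1 oq1 op2 oq2 _ hK2; have [_ opE2 _] := K op2 oq2 hK2.
  by rewrite -[L *m (op1 *m op2) *m E]mulmxA -[(op1 *m op2) *m E]mulmxA opE2 !mulmxA.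
- move=> op oq g; split.
    case=> Hop Hoq hg; rewrite yE /actW => -[h1 h2].
    have opE : op *m E = E *m g by rewrite -[in RHS]h1 -mulmxA mulVmx // mulmx1.
    split.
      apply/and3P; split => //; apply/eqP; rewrite xE mulmxA opE -!mulmxA.
      congr (E *m _).
      by move: (congr1 trmx h2); rewrite !trmx_mul trmxK.
    by rewrite -mulmxA opE mulmxA LE mul1mx.
  case=> hK ->; have [ub opE oqY] := K op oq hK.
  case/and3P: (hK) => Hop Hoq _.
  split => //; rewrite yE /actW /=.
  rewrite opE -mulmxA mulmxV // mulmx1.
  by rewrite oqY -mulmxA -trmx_mul mulmxV // trmx1 mulmx1.
exists (fun z => z.2); split; [|split; [|split; [|split]]].
- move=> [[a b] c] [[[/= _ hn] _] hpr]; rewrite yE /pr /= in hpr.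
  case: hpr => _ hb; rewrite hb in hn.
  rewrite /inZx' x'E /=; apply/eqP; rewrite -subr_eq0 opprK addrC hn //.
- move=> [[a1 b1] c1] [[a2 b2] c2] [_ h1] [_ h2] /= ->.
  by move: h1 h2; rewrite yE /pr /= => -[-> ->] [-> ->].
- move=> w2 hw; exists (E, Y, w2); split => //; split => //; split => //=.
  split => //=; rewrite /inZx' in hw; by rewrite hw x'E addrN.
- by move=> ot [[a b] c] _ _; rewrite /actWH /= trmx1 mulmx1.
- by move=> op oq [[a b] c] _ _; rewrite /actWH /= mul1mx.
Qed.
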